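(* Let $L$ be a binary $\mathbb{Z}_2$-lattice such that $\mathfrak{s}L = \mathbb{Z}_2$ and $\mathbb{Q}_2L$ is a hyperbolic plane. Let $s$ and $t$ be integers such that $t > 2s = \operatorname{ord}_2 dL$. Let $z$ be a primitive vector in $L$ with $\operatorname{ord}_2 Q(z) = t+1$, and let $w\in L$ satisfy $\operatorname{ord}_2 B(z,w) = t$. Then $\operatorname{ord}_2 Q(w)\ge t+2$.
   Context: A $\mathbb{Z}_2$-lattice is a finitely generated $\mathbb{Z}_2$-submodule of a quadratic space $(V,B)$ over $\mathbb{Q}_2$ with $Q(v)=B(v,v)$, assumed integral and nondegenerate. $\mathfrak{s}L=B(L,L)$ is the scale, $\mathbb{Q}_2L$ the space spanned by $L$, and $dL$ the determinant of a Gram matrix of $L$ (well defined up to unit squares). A vector $z$ is primitive if $\mathbb{Z}_2z$ is a direct summand of $L$. $\operatorname{ord}_2$ is the $2$-adic valuation (with $\operatorname{ord}_2 0=\infty$). *)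

(* Defs.v *)
(* The ring Z_2 of 2-adic integers is not in the installed
   libraries, so it is built here as the inverse limit  lim Z/2^n Z :
   an element is a sequence of integers (x_n) with x_{n+1} = x_n mod 2^n;
   two such sequences represent the same 2-adic integer iff x_n = y_n mod 2^n
   for all n (see z2eq).  *)
From mathcomp Require Import all_boot all_algebra.
Set Implicit Arguments.
Unset Strict Implicit.
Unset Printing Implicit Defensive.
Import GRing.Theory Num.Theory.
Local Open Scope ring_scope.

Definition p2 (n : nat) : int := (2 ^ n)%N%:Z.

Record Z2 := mkZ2 {
  z2s :> nat -> int ;
  z2P : forall n, (z2s n.+1 = z2s n %[mod p2 n])%Z }.

Lemma z2const_proof (k : int) : forall n : nat, ((fun _ : nat => k) n.+1 = (fun _ : nat => k) n %[mod p2 n])%Z.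
Proof. by []. Qed.
Definition z2const (k : int) : Z2 := mkZ2 (z2const_proof k).

Lemma z2add_proof (x y : Z2) : forall n, ((fun m => x m + y m) n.+1 = (fun m => x m + y m) n %[mod p2 n])%Z.
Proof. by move=> n; rewrite /= -modzDm (z2P x) (z2P y) modzDm. Qed.
Definition z2add (x y : Z2) : Z2 := mkZ2 (z2add_proof x y).

Lemma z2mul_proof (x y : Z2) : forall n, ((fun m => x m * y m) n.+1 = (fun m => x m * y m) n %[mod p2 n])%Z.
Proof. by move=> n; rewrite /= -modzMm (z2P x) (z2P y) modzMm. Qed.
Definition z2mul (x y : Z2) : Z2 := mkZ2 (z2mul_proof x y).

Lemma z2opp_proof (x : Z2) : forall n, ((fun m => - x m) n.+1 = (fun m => - x m) n %[mod p2 n])%Z.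
Proof. by move=> n; rewrite /= -modzNm (z2P x) modzNm. Qed.
Definition z2opp (x : Z2) : Z2 := mkZ2 (z2opp_proof x).

Definition z2sub (x y : Z2) : Z2 := z2add x (z2opp y).

Definition z2eq (x y : Z2) : Prop := forall n : nat, (x n = y n %[mod p2 n])%Z.

(* ord_2 x >= m  (for m : nat), i.e. x \in 2^m Z_2 ; true for all m iff x = 0 *)
Definition ord2_ge (x : Z2) (m : nat) : Prop := (p2 m %| x m)%Z.
(* ord_2 x = k, for k an integer (ord_2 0 = oo is never equal to an integer) *)
Definition ord2_eq (x : Z2) (k : int) : Prop :=
  exists n : nat, k = n%:Z /\ ord2_ge x n /\ ~ ord2_ge x n.+1.
(* ord_2 x >= k, for k an integer (always true when k <= 0) *)
Definition ord2_geZ (x : Z2) (k : int) : Prop :=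
  forall n : nat, k = n%:Z -> ord2_ge x n.

(* A binary Z_2-lattice L is free of rank 2; we fix a basis and describe L by
   its (integral, symmetric) Gram matrix [[a, b], [b, c]].  Vectors of L are
   coordinate pairs (v1, v2) in Z_2 x Z_2. *)
Record gram2 := Gram2 { ga : Z2 ; gb : Z2 ; gc : Z2 }.
Definition vec2 := (Z2 * Z2)%type.

Definition bil (G : gram2) (v w : vec2) : Z2 :=
  z2add (z2mul (ga G) (z2mul v.1 w.1))
   (z2add (z2mul (gb G) (z2add (z2mul v.1 w.2) (z2mul v.2 w.1)))
          (z2mul (gc G) (z2mul v.2 w.2))).
Definition qf (G : gram2) (v : vec2) : Z2 := bil G v v.
Definition dL (G : gram2) : Z2 := z2sub (z2mul (ga G) (gc G)) (z2mul (gb G) (gb G)).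

Definition nondeg2 (G : gram2) : Prop := ~ (forall m, ord2_ge (dL G) m).

(* sL = B(L, L) = Z_2 : the ideal generated by the values B(v,w) is all of
   Z_2, i.e. (Z_2 being local) some value B(v, w) is a unit (ord_2 = 0). *)
Definition scale_is_Z2 (G : gram2) : Prop :=
  exists v w : vec2, ord2_eq (bil G v w) 0.

(* Q_2 L is a hyperbolic plane: Q_2 L has a basis e, f with Q(e) = Q(f) = 0
   and B(e, f) = 1.  Clearing denominators (e, f can be scaled into L), this
   says: there are e, f in L with Q(e) = Q(f) = 0 and B(e, f) = 2^k for some
   k >= 0 (then e/2^k, f is a hyperbolic basis of Q_2 L; e, f are automatically
   independent since B(e,f) <> 0 = Q(e)). *)
Definition hyperbolic_plane (G : gram2) : Prop :=
  exists (e f : vec2) (k : nat),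
    z2eq (qf G e) (z2const 0) /\ z2eq (qf G f) (z2const 0) /\
    z2eq (bil G e f) (z2const (p2 k)).

(* z is primitive: Z_2 z is a direct summand of L, i.e. z can be completed to
   a basis {z, u} of L (the coordinate matrix [z u] is invertible over Z_2,
   i.e. its determinant is a unit). *)
Definition primitive (z : vec2) : Prop :=
  exists u : vec2, ord2_eq (z2sub (z2mul z.1 u.2) (z2mul z.2 u.1)) 0.

(* Main.v *)
Require Import Defs.
From mathcomp Require Import all_boot all_algebra.
From mathcomp Require Import zify ring.
Set Implicit Arguments.
Unset Strict Implicit.
Import GRing.Theory Num.Theory.
Local Open Scope ring_scope.

Definition oddz (o : int) := ~~ (2 %| o)%Z.
Definition ev (x : int) (n : nat) := exists2 o, oddz o & x = p2 n * o.

Lemma p2D m n : p2 (m + n) = p2 m * p2 n.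
Proof. by rewrite /p2 expnD PoszM. Qed.
Lemma p2S n : p2 n.+1 = 2 * p2 n.
Proof. by rewrite /p2 expnS PoszM. Qed.
Lemma p2_0 : p2 0 = 1. Proof. by []. Qed.
Lemma p2_neq0 n : p2 n != 0.
Proof. by rewrite /p2 eqz_nat expn_eq0. Qed.

Lemma oddzE o : oddz o = odd `|o|%N.
Proof. by rewrite /oddz dvdzE /= dvdn2 negbK. Qed.

Lemma oddzM x y : oddz x -> oddz y -> oddz (x * y).
Proof. by rewrite !oddzE abszM oddM => -> ->. Qed.

Lemma sq8 o : oddz o -> exists A, o * o = 1 + 8 * A.
Proof.
rewrite /oddz => H. have := divz_eq o 8. set q := (o %/ 8)%Z. set r := (o %% 8)%Z.
have : (0 <= r < 8) by lia. move=> Hr E. rewrite E.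
have : (r = 1 \/ r = 3 \/ r = 5 \/ r = 7) by lia. case=> [->|[->|[->|->]]].
- by exists (8*q*q + 2*q); ring.
- by exists (8*q*q + 6*q + 1); ring.
- by exists (8*q*q + 10*q + 3); ring.
- by exists (8*q*q + 14*q + 6); ring.
Qed.

Lemma ev_neq0 x n : ev x n -> x != 0.
Proof. case=> o Ho ->; rewrite mulf_eq0 negb_or p2_neq0 /=; apply: contraNneq Ho => ->; by []. Qed.

Lemma ev_uniq0 i j o o' : oddz o -> oddz o' -> p2 i * o = p2 j * o' -> (i <= j)%N -> i = j.
Proof.
move=> Ho Ho' E /leP Hij. case: (ltnP i j) => [/ltP lt|/leP ge]; last lia.
have Ej : j = (i + (j - i - 1).+1)%N by lia.
move: E; rewrite Ej p2D p2S -mulrA => /(mulfI (p2_neq0 i)) E.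
exfalso; move/negP: Ho; apply; rewrite E; apply/dvdzP; exists (p2 (j - i - 1) * o'); ring.
Qed.

Lemma ev_uniq x i j : ev x i -> ev x j -> i = j.
Proof.
case=> o Ho -> [o' Ho' E]. case: (leqP i j) => H; first exact: (@ev_uniq0 i j o o' Ho Ho' E H).
symmetry; apply: (@ev_uniq0 j i o' o Ho' Ho (esym E)); exact: ltnW.
Qed.

Lemma ev_mul x y i j : ev x i -> ev y j -> ev (x * y) (i + j).
Proof.
case=> o Ho -> [o' Ho' ->]; exists (o * o'); first exact: oddzM.
by rewrite p2D; ring.
Qed.

Lemma ev_dec x : x != 0 -> exists n, ev x n.
Proof.
move=> nz. have ax : (0 < `|x|)%N by rewrite absz_gt0.
have pr2 : prime 2 by [].
case: (pfactor_coprime pr2 ax) => m.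
rewrite /= coprime2n => om Em.
exists (logn 2 `|x|); exists (sgz x * m%:Z).
  rewrite oddzE abszM /= oddM om andbT. by case: sgzP nz.
rewrite {1}(intEsg x) {1}Em PoszM /p2 /=. ring.
Qed.

Lemma ev_cancel x y i n : ev (x * y) n -> ev x i -> exists2 j, (i + j)%N = n & ev y j.
Proof.
move=> Hxy Hx. have : y != 0.
  by apply: contraNneq (ev_neq0 Hxy) => ->; rewrite mulr0.
case/ev_dec => j Hy. exists j => //. exact: ev_uniq (ev_mul Hx Hy) Hxy.
Qed.

Lemma ev_sq x n : ev (x * x) (n + n) -> ev x n.
Proof.
move=> H. have : x != 0.
  by apply: contraNneq (ev_neq0 H) => ->; rewrite mulr0.
case/ev_dec => j Hj. have := ev_uniq (ev_mul Hj Hj) H => E.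
have -> : n = j by lia. done.
Qed.

Lemma p2_dvd m n : (m <= n)%N -> (p2 m %| p2 n)%Z.
Proof. move=> H; rewrite -(subnKC H) p2D; exact: dvdz_mulr. Qed.

Lemma modz_dvdW (d d' a b : int) : (d %| d')%Z -> (a = b %[mod d'])%Z -> (a = b %[mod d])%Z.
Proof.
move=> Hd /eqP; rewrite eqz_mod_dvd => H; apply/eqP; rewrite eqz_mod_dvd.
exact: dvdz_trans H.
Qed.

Lemma z2_lvl (x : Z2) m n : (m <= n)%N -> (x n = x m %[mod p2 m])%Z.
Proof.
elim: n => [|n IH] Hmn.
  by move: Hmn; rewrite leqn0 => /eqP ->.
case: (ltngtP m n.+1) => [lt||->] //; last by lia.
have := IH lt. move=> H1. 
have H2 := @modz_dvdW _ _ _ _ (@p2_dvd m n lt) (z2P x n).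
by rewrite H2 H1.
Qed.

Lemma dvd_lvl (x : Z2) m n : (m <= n)%N -> (p2 m %| x n)%Z = (p2 m %| x m)%Z.
Proof.
move=> H; have E := z2_lvl x H.
by apply/dvdz_mod0P/dvdz_mod0P; rewrite E.
Qed.

Lemma ev_of (x : Z2) n N : ord2_ge x n -> ~ ord2_ge x n.+1 -> (n < N)%N -> ev (x N) n.
Proof.
rewrite /ord2_ge => H1 H2 HN.
have : (p2 n %| x N)%Z by rewrite (@dvd_lvl x n N) // ltnW.
case/dvdzP => q Eq. exists q; last by rewrite Eq mulrC.
apply/negP => /dvdzP [r Er]. apply: H2. rewrite -(@dvd_lvl x n.+1 N) //.
by apply/dvdzP; exists r; rewrite Eq Er p2S; ring.
Qed.

Definition bz (a b c v1 v2 x1 x2 : int) := a*(v1*x1) + (b*(v1*x2+v2*x1)+c*(v2*x2)).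

Lemma modz_ex (x y m : int) : (x = y %[mod m])%Z -> exists g, x = y + g * m.
Proof.
move/eqP; rewrite eqz_mod_dvd => /dvdzP [g Eg]; exists g; rewrite -Eg; ring.
Qed.

Lemma p2_3 : p2 3 = 8. Proof. by []. Qed.

Lemma core (a b c z1 z2 u1 u2 w1 w2 e1 e2 f1 f2 : int) (s t k N : nat) :
  ev (a*c + -(b*b)) (s+s) ->
  ev (bz a b c z1 z2 z1 z2) (t.+1) ->
  ev (bz a b c z1 z2 w1 w2) t ->
  oddz (z1*u2 + -(z2*u1)) ->
  (bz a b c e1 e2 e1 e2 = 0 %[mod p2 N])%Z ->
  (bz a b c f1 f2 f1 f2 = 0 %[mod p2 N])%Z ->
  (bz a b c e1 e2 f1 f2 = p2 k %[mod p2 N])%Z ->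
  (s + s < t)%N -> (k + k + 3 <= N)%N ->
  (p2 t.+2 %| bz a b c w1 w2 w1 w2)%Z.
Proof.
move=> Hd Hq HB HD He Hf Hef Hst HN.
case: Hd => δ oδ Ed.
case/modz_ex: He => α; rewrite add0r => Eα.
case/modz_ex: Hf => α'; rewrite add0r => Eα'.
case/modz_ex: Hef => γ Eγ.
have idE : bz a b c e1 e2 e1 e2 * bz a b c f1 f2 f1 f2 - bz a b c e1 e2 f1 f2 * bz a b c e1 e2 f1 f2
   = (e1*f2 - e2*f1) * (e1*f2 - e2*f1) * (a*c + -(b*b)) by rewrite /bz; ring.
move: idE; rewrite Eα Eα' Eγ Ed.
set D := e1*f2 - e2*f1.
have EN : p2 N = p2 k * p2 k * (8 * p2 (N - (k+k+3))).
  by rewrite -p2_3 -!p2D; congr p2; lia.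
rewrite EN => idE.
set P := p2 (N - (k + k + 3)). set pk := p2 k.
set O := 8*P*(pk*pk*8*P*(α*α' - γ*γ) - 2*γ*pk) - 1.
have EO : D*D*(p2(s+s)*δ) = p2 (k+k) * O by rewrite -idE p2D /O /pk /P; ring.
have oO : oddz O by rewrite /O /oddz; lia.
have nD : D != 0.
  apply/eqP => D0; move: EO; rewrite D0 !mul0r => /esym/eqP; rewrite mulf_eq0 (negPf (p2_neq0 _)) /=.
  by apply/negP; apply: contraNneq oO => ->.
case: (ev_dec nD) => j [D' oD' ED].
have ej : (j + j + (s + s))%N = (k + k)%N.
  have E2 : p2 (j + j + (s + s)) * (D' * D' * δ) = p2 (k + k) * O by rewrite -EO ED !p2D; ring.
  have o2 : oddz (D' * D' * δ) by apply: oddzM => //; apply: oddzM.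
  case: (leqP (j + j + (s + s)) (k + k)) => H; first exact: (ev_uniq0 o2 oO E2).
  by symmetry; apply: (ev_uniq0 oO o2 (esym E2)); apply: ltnW.
have EO2 : D' * D' * δ = O.
  apply: (mulfI (p2_neq0 (k+k))); rewrite -EO ED -ej !p2D; ring.
have [r Er] : exists r, δ = 8 * r - 1.
  case: (sq8 oD') => A EA.
  exists (P*(pk*pk*8*P*(α*α' - γ*γ) - 2*γ*pk) - A * δ).
  have : (1 + 8 * A) * δ = O by rewrite -EA.
  rewrite /O => h. have h2 : δ = (1 + 8*A)*δ - 8*A*δ by ring. by rewrite {1}h2 h; ring.
case: Hq => q' oq' Eq.
set Δ := z1*u2 + -(z2*u1).
have id3 : bz a b c z1 z2 z1 z2 * bz a b c u1 u2 u1 u2 - bz a b c z1 z2 u1 u2 * bz a b c z1 z2 u1 u2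
   = Δ*Δ*(a*c + -(b*b)) by rewrite /bz /Δ; ring.
rewrite Eq Ed in id3.
have Et : p2 t.+1 = p2 (s+s) * (2 * p2 (t - (s+s))) by rewrite -p2S -p2D; congr p2; lia.
have Hβ : ev (bz a b c z1 z2 u1 u2 * bz a b c z1 z2 u1 u2) (s+s).
  exists (2 * p2 (t-(s+s)) * q' * bz a b c u1 u2 u1 u2 - Δ*Δ*δ).
    have : oddz (Δ*Δ*δ) by apply: oddzM => //; apply: oddzM.
    by rewrite /oddz; lia.
  have h : bz a b c z1 z2 u1 u2 * bz a b c z1 z2 u1 u2 =
     p2 t.+1 * q' * bz a b c u1 u2 u1 u2 - Δ*Δ*(p2 (s+s) * δ) by rewrite -id3; ring.
  by rewrite h Et; ring.
have Hb := ev_sq Hβ.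
case: HB => g og Eg.
have id4 : Δ * bz a b c z1 z2 w1 w2 = (w1*u2 - w2*u1) * bz a b c z1 z2 z1 z2
    + (z1*w2 - z2*w1) * bz a b c z1 z2 u1 u2 by rewrite /bz /Δ; ring.
have Hy : ev (bz a b c z1 z2 u1 u2 * (z1*w2 - z2*w1)) t.
  exists (Δ * g - 2 * (w1*u2 - w2*u1) * q').
    have : oddz (Δ*g) by apply: oddzM.
    by rewrite /oddz; lia.
  have h : bz a b c z1 z2 u1 u2 * (z1*w2 - z2*w1) =
     Δ * bz a b c z1 z2 w1 w2 - (w1*u2 - w2*u1) * bz a b c z1 z2 z1 z2 by rewrite id4; ring.
  by rewrite h Eg Eq p2S; ring.
case: (ev_cancel Hy Hb) => j2 ej2 [y' oy' Ey].
have id5 : bz a b c z1 z2 z1 z2 * bz a b c w1 w2 w1 w2 - bz a b c z1 z2 w1 w2 * bz a b c z1 z2 w1 w2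
   = (z1*w2 - z2*w1) * (z1*w2 - z2*w1) * (a*c + -(b*b)) by rewrite /bz; ring.
have [A1 EA1] := sq8 og.
have [A2 EA2] := sq8 oy'.
set W := A1 + r + A2*(8*r - 1).
have key : q' * bz a b c w1 w2 w1 w2 = p2 t.+2 * W.
  apply: (mulfI (p2_neq0 t.+1)).
  have h : p2 t.+1 * (q' * bz a b c w1 w2 w1 w2) = bz a b c z1 z2 z1 z2 * bz a b c w1 w2 w1 w2
    by rewrite Eq; ring.
  rewrite h.
  have h5 : bz a b c z1 z2 z1 z2 * bz a b c w1 w2 w1 w2 = bz a b c z1 z2 w1 w2 * bz a b c z1 z2 w1 w2
     + (z1*w2 - z2*w1) * (z1*w2 - z2*w1) * (a*c + -(b*b)) by rewrite -id5; ring.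
  rewrite h5 Eg Ey Ed Er.
  have -> : t = (s + j2)%N by lia.
  rewrite !p2S !p2D.
  transitivity (p2 s * p2 s * p2 j2 * p2 j2 * (g*g + (y'*y')*(8*r-1))); first ring.
  rewrite EA1 EA2 /W; ring.
have : (p2 t.+2 %| q' * bz a b c w1 w2 w1 w2)%Z by apply/dvdzP; exists W; rewrite key mulrC.
rewrite Gauss_dvdzr // coprimezE /= coprime_pexpl // coprime2n -oddzE //.
Qed.

Theorem lemma6p4 (G : gram2) (s t : int) (z w : vec2) :
  nondeg2 G ->
  scale_is_Z2 G ->
  hyperbolic_plane G ->
  2 * s < t ->
  ord2_eq (dL G) (2 * s) ->
  primitive z ->
  ord2_eq (qf G z) (t + 1) ->
  ord2_eq (bil G z w) t ->
  ord2_geZ (qf G w) (t + 2).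
Proof.
move=> _ _ [e [f [k [He [Hf Hef]]]]] Hst [nd [Ed [Hd1 Hd2]]] [u [nD [ED [HD1 HD2]]]]
  [nq [Eq [Hq1 Hq2]]] [nb [Eb [Hb1 Hb2]]] n En.
subst t.
have Es : nd = (`|s| + `|s|)%N by lia.
have Eq' : nq = nb.+1 by lia.
have En' : n = nb.+2 by lia.
have Hlt : (nd < nb)%N by lia.
have E0 : nD = 0%N by lia.
subst nd nq n nD.
set N := (nb + k + k + 10)%N.
rewrite /ord2_ge -(@dvd_lvl (qf G w) nb.+2 N); last by rewrite /N; lia.
have Hd : ev (dL G N) (`|s| + `|s|) by apply: ev_of => //; rewrite /N; lia.
have Hq : ev (qf G z N) nb.+1 by apply: ev_of => //; rewrite /N; lia.
have HB : ev (bil G z w N) nb by apply: ev_of => //; rewrite /N; lia.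
have HD : ev (z2sub (z2mul z.1 u.2) (z2mul z.2 u.1) N) 0 by apply: ev_of => //; rewrite /N; lia.
have oD : oddz (z.1 N * u.2 N + - (z.2 N * u.1 N)).
  by case: HD => o Ho /= ->; rewrite /p2 /= mul1r.
exact: (@core (ga G N) (gb G N) (gc G N) (z.1 N) (z.2 N) (u.1 N) (u.2 N) (w.1 N) (w.2 N)
  (e.1 N) (e.2 N) (f.1 N) (f.2 N) `|s| nb k N Hd Hq HB oD (He N) (Hf N) (Hef N) Hlt
  (ltac:(rewrite /N; lia))).
Qed.
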